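(* Let $F$ be a forest and let $X$ be a multiset of vertices of $F$. Then there is at most one linear forest that is a subgraph of $F$ with end-multiset equal to $X$.
   Context: A multiset is a set together with a positive integer multiplicity assigned to each member. A linear forest is a forest in which every component is a path. The end-multiset of a linear forest $H$ is the multiset of ends of the components of $H$, where an end of a component $P$ has multiplicity one if $P$ has at least one edge, and multiplicity two if $P$ has no edges. *)

(* Defs.v *)
From mathcomp Require Import all_boot.
Set Implicit Arguments. Unset Strict Implicit. Unset Printing Implicit Defensive.

Definition simple_graph (T : finType) (e : rel T) : Prop :=
  symmetric e /\ irreflexive e.

Definition is_forest (T : finType) (e : rel T) : Prop :=
  simple_graph e /\ ~ (exists c : seq T, [/\ uniq c, 3 <= size c & cycle e c]).

Definition is_subgraph (T : finType) (e : rel T) (VH : {set T}) (EH : {set {set T}}) : Prop :=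
  forall E, E \in EH -> exists x y, [/\ E = [set x; y], x != y, e x y, x \in VH & y \in VH].

Definition adjH (T : finType) (EH : {set {set T}}) : rel T :=
  fun x y => (x != y) && ([set x; y] \in EH).

Definition compH (T : finType) (VH : {set T}) (EH : {set {set T}}) (v : T) : {set T} :=
  [set u in VH | connect (fun x y => adjH EH x y && (x \in VH) && (y \in VH)) v u].

Definition comp_is_path (T : finType) (VH : {set T}) (EH : {set {set T}}) (C : {set T}) : Prop :=
  exists p : seq T, [/\ uniq p, [set x in p] = C &
    forall x y, x \in C -> y \in C ->
      adjH EH x y = (x != y) && ((x \in p) && (y \in p) &&
        ((index y p == (index x p).+1) || (index x p == (index y p).+1)))].

Definition linear_forest (T : finType) (VH : {set T}) (EH : {set {set T}}) : Prop :=
  forall v, v \in VH -> comp_is_path VH EH (compH VH EH v).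

Definition degH (T : finType) (EH : {set {set T}}) (v : T) : nat :=
  #|[set u | adjH EH v u]|.

Definition comp_has_edge (T : finType) (EH : {set {set T}}) (C : {set T}) : bool :=
  [exists x in C, exists y in C, adjH EH x y].

(* Multiplicity of v in the end-multiset of H (v lies in exactly one component
   C = compH VH EH v when v \in VH): the ends of the path C are its vertices of
   degree at most one; each end has multiplicity one if C has an edge, and the
   unique vertex of an edgeless component has multiplicity two. *)
Definition end_mult (T : finType) (VH : {set T}) (EH : {set {set T}}) (v : T) : nat :=
  if v \in VH then
    (if comp_has_edge EH (compH VH EH v) then (if degH EH v <= 1 then 1 else 0) else 2)
  else 0.

(* A multiset of vertices is represented by its multiplicity function T -> nat
   (members are the vertices with positive multiplicity). *)

(* Main.v *)
Require Import Defs.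
From mathcomp Require Import all_boot zify.
Set Implicit Arguments. Unset Strict Implicit.

Lemma cycle_lemma (T : finType) (r : rel T) : symmetric r -> irreflexive r ->
  (forall z y, r z y -> exists2 w, r z w & w != y) ->
  forall a b, r a b -> exists c : seq T, [/\ uniq c, 3 <= size c & cycle r c].
Proof.
move=> rs ri rn a b rab.
suff H : forall k x s, #|T| - size s < k -> uniq (x::s) -> path r x s -> s != [::] ->
  exists c : seq T, [/\ uniq c, 3 <= size c & cycle r c].
  apply: (H #|T|.+1 b [:: a]); first lia.
  - rewrite /= inE andbT; apply/eqP=> eba; move: rab; rewrite eba ri //.
  - by rewrite /= rs rab.
  - by [].
elim=> [|k IH] x s; first by [].
case: s => [|y s'] // Hk Hu Hp _.
have rxy : r x y by move: Hp => /= /andP[].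
have [w rxw wy] := rn _ _ rxy.
case wxs: (w \in x :: y :: s').
- move: wxs; rewrite in_cons => /orP[/eqP wx|ws].
    by move: rxw; rewrite wx ri.
  set s := y :: s' in Hu Hp ws *.
  set k0 := index w s.
  have k0pos : 0 < k0 by rewrite /k0 /s /= eq_sym (negbTE wy).
  have k0lt : k0 < size s by rewrite index_mem.
  exists (take k0.+2 (x :: s)); split.
  + exact: take_uniq.
  + rewrite size_takel /=; [lia|]; move: k0lt; rewrite /= ; lia.
  + have P : path r x (take k0.+1 s).
      move: Hp; rewrite -{1}(cat_take_drop k0.+1 s) cat_path; by case/andP.
    idtac.
    move: P; rewrite (take_nth w k0lt) nth_index // => P.
    change (take k0.+2 (x::s)) with (x :: take k0.+1 s).
    rewrite (take_nth w k0lt) nth_index //= rcons_path P last_rcons.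
    by rewrite rs.
- have Hu' : uniq (w :: x :: y :: s') by rewrite /= -/(uniq (x :: y :: s')) Hu andbT; move: wxs; rewrite !inE =>  ->.
  have := max_card (mem (w :: x :: y :: s')).
  rewrite (card_uniqP Hu') /= => Hs.
  apply: (IH w (x :: y :: s')) => //.
  + move: Hk Hs => /=; lia.
  + by rewrite /= rs rxw.
Qed.
Section G.
Variables (T : finType) (e : rel T).
Hypothesis es : symmetric e.

Lemma adj_in (V : {set T}) (E : {set {set T}}) x y :
  is_subgraph e V E -> adjH E x y -> [/\ x \in V, y \in V & e x y].
Proof.
move=> sub /andP[nxy /sub [a [b [eq nab eab aV bV]]]].
have : x \in [set a; b] by rewrite -eq set21.
have : y \in [set a; b] by rewrite -eq set22.
rewrite !inE => /orP[]/eqP ? /orP[]/eqP ?; subst => //.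
- by rewrite eqxx in nxy.
- by rewrite es.
- by rewrite eqxx in nxy.
Qed.

Lemma adj_sym (E : {set {set T}}) x y : adjH E x y = adjH E y x.
Proof. by rewrite /adjH eq_sym setUC. Qed.

Lemma comp_only (V : {set T}) (E : {set {set T}}) v x :
  (forall u, ~~ adjH E v u) ->
  connect (fun x y => adjH E x y && (x \in V) && (y \in V)) v x -> x = v.
Proof.
move=> H /connectP [[|z q] /= pth ->] //.
by move: pth => /andP[/andP[/andP[h _] _] _]; move: (H z); rewrite h.
Qed.

Variables (V : {set T}) (E : {set {set T}}).
Hypothesis sub : is_subgraph e V E.
Hypothesis LF : linear_forest V E.

Lemma in_comp v u : v \in V -> adjH E v u -> (v \in compH V E v) && (u \in compH V E v).
Proof.
move=> vV a; have [_ uV _] := adj_in sub a.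
rewrite !inE vV uV connect0 /=; apply: connect1; by rewrite /= a vV uV.
Qed.

Lemma deg_le2 v : v \in V -> degH E v <= 2.
Proof.
move=> vV; have [p [up Cp Hp]] := LF vV.
set i := index v p.
have : [set u | adjH E v u] \subset [set nth v p i.+1; nth v p i.-1].
  apply/subsetP => u; rewrite inE => a.
  have /andP[vC uC] := in_comp vV a.
  move: (a); rewrite Hp // => /andP[_ /andP[/andP[_ up'] /orP[/eqP h|/eqP h]]].
  + by rewrite !inE -h nth_index ?eqxx.
  + by rewrite !inE /i h /= nth_index ?eqxx ?orbT.
move/subset_leq_card; rewrite cards2 /degH; case: (_ != _) => //; lia.
Qed.

Lemma deg_odd v : odd (degH E v) = odd (end_mult V E v).
Proof.
rewrite /end_mult /degH.
case vV: (v \in V); last first.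
  suff -> : [set u | adjH E v u] = set0 by rewrite cards0.
  apply/setP => u; rewrite !inE; apply/negP => /(adj_in sub) [h _ _].
  by rewrite h in vV.
case hE: comp_has_edge; last first.
  suff -> : [set u | adjH E v u] = set0 by rewrite cards0.
  apply/setP => u; rewrite !inE; apply/negP => a.
  have /andP[vC uC] := in_comp vV a.
  move/negbT: hE => /negP; apply; apply/existsP; exists v; rewrite vC /=.
  by apply/existsP; exists u; rewrite uC.
case: ifP => hd.
  have : #|[set u | adjH E v u]| != 0.
    apply/negP => /eqP/cards0_eq H.
    have H' : forall u, ~~ adjH E v u.
      move=> u; apply/negP => a; have : u \in [set u | adjH E v u] by rewrite inE.
      by rewrite H inE.
    move: hE => /existsP [x /andP[xC /existsP [y /andP[yC a]]]].
    move: xC yC; rewrite !inE => /andP[_ /(comp_only H') xv] /andP[_ /(comp_only H') yv].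
    by move: a; rewrite xv yv /adjH eqxx.
  move: hd; rewrite /degH; case: #|_| => [|[|]] //.
have := deg_le2 vV; move: hd; rewrite /degH; case: #|_| => [|[|[|]]] //.
Qed.

End G.

Lemma odd_symdiff (T : finType) (a b : pred T) :
  odd #|[set u | a u (+) b u]| = odd #|[set u | a u]| (+) odd #|[set u | b u]|.
Proof.
set A := [set u | a u]; set B := [set u | b u].
have -> : [set u | a u (+) b u] = (A :|: B) :\: (A :&: B).
  by apply/setP => u; rewrite !inE; case: (a u); case: (b u).
have H1 := cardsUI A B.
have H2 := cardsID (A :&: B) (A :|: B).
move: H2; rewrite (setIidPr (subset_trans (subsetIl A B) (subsetUl A B))) => H2.
have H : #|A| + #|B| = #|(A :|: B) :\: (A :&: B)| + (#|A :&: B|).*2 by rewrite -addnn; lia.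
by move: (congr1 odd H); rewrite !oddD odd_double addbF => <-.
Qed.

Lemma V_sub (T : finType) (e : rel T) (V1 V2 : {set T}) (E : {set {set T}}) :
  symmetric e -> is_subgraph e V2 E ->
  (forall v, end_mult V1 E v = end_mult V2 E v) -> V1 \subset V2.
Proof.
move=> es sub2 Hm; apply/subsetP => v vV1.
case nv2: (v \in V2) => //.
have := Hm v; rewrite /end_mult vV1 nv2.
case: comp_has_edge => //; case: ifP => // hd _.
have : 0 < #|[set u | adjH E v u]| by move: hd; rewrite /degH; lia.
rewrite card_gt0 => /set0Pn [u]; rewrite inE => /(adj_in es sub2) [h _ _].
by rewrite h in nv2.
Qed.

Theorem mainTheorem17 (T : finType) (e : rel T) (X : T -> nat) :
  is_forest e ->
  forall (V1 V2 : {set T}) (E1 E2 : {set {set T}}),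
    is_subgraph e V1 E1 -> linear_forest V1 E1 -> (forall v, end_mult V1 E1 v = X v) ->
    is_subgraph e V2 E2 -> linear_forest V2 E2 -> (forall v, end_mult V2 E2 v = X v) ->
    V1 = V2 /\ E1 = E2.
Proof.
move=> [[es ei] nocyc] V1 V2 E1 E2 sub1 LF1 X1 sub2 LF2 X2.
have EE : E1 = E2.
  set D := (E1 :\: E2) :|: (E2 :\: E1).
  suff : D == set0.
    rewrite setU_eq0 !setD_eq0 => /andP[h1 h2]; apply/eqP; by rewrite eqEsubset h1 h2.
  have [->|[S SD]] := set_0Vmem D; first by [].
  exfalso; apply: nocyc.
  have SE : S \in E1 \/ S \in E2.
    by move: SD; rewrite !inE => /orP[/andP[_ ->]|/andP[_ ->]]; [left|right].
  have [x [y [Sxy nxy exy]]] : exists x y, [/\ S = [set x; y], x != y & e x y].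
    case: SE => [/sub1|/sub2] [x [y [? ? ? _ _]]]; by exists x, y.
  set r := adjH D.
  have rsub : subrel r e.
    move=> u w /andP[nuw]; rewrite !inE => /orP[/andP[_ h]|/andP[_ h]].
      have a : adjH E1 u w by rewrite /adjH nuw h.
    by have [] := adj_in es sub1 a.
    have a : adjH E2 u w by rewrite /adjH nuw h.
    by have [] := adj_in es sub2 a.
  have par : forall z, odd #|[set u | r z u]| = false.
    move=> z.
    have -> : [set u | r z u] = [set u | adjH E1 z u (+) adjH E2 z u].
      apply/setP => u; rewrite !inE /r /adjH !inE.
      by case: (z != u); case: ([set z; u] \in E1); case: ([set z; u] \in E2).
    rewrite odd_symdiff.
    have := deg_odd es sub1 LF1 z; have := deg_odd es sub2 LF2 z; rewrite /degH X1 X2 => -> ->.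
    by rewrite addbb.
  have [c [uc sc cc]] : exists c : seq T, [/\ uniq c, 3 <= size c & cycle r c].
    apply: (@cycle_lemma _ r _ _ _ x y).
    - by move=> u w; rewrite /r adj_sym.
    - by move=> u; rewrite /r /adjH eqxx.
    - move=> z w rzw.
      set N := [set u | r z u].
      have wN : w \in N by rewrite inE.
      have := cardsD1 w N; rewrite wN => HN.
      have N1 : #|N| != 1 by apply/eqP => h; move: (par z); rewrite -/N h.
      have : 0 < #|N :\ w| by lia.
      rewrite card_gt0 => /set0Pn [u]; rewrite !inE => /andP[uw ru].
      by exists u.
    - by rewrite /r /adjH nxy -Sxy.
  by exists c; split => //; exact: (sub_cycle rsub cc).
split => //; subst E2.
apply/eqP; rewrite eqEsubset (V_sub es sub2) ?(V_sub es sub1) // => v; by rewrite X1 X2.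
Qed.
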